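(* For every $n\ge 0$ and $i\in\{0,1\}$, the function $x\mapsto v_n(x,i)$ is nonincreasing on $\{0,1,2,\dots\}$; equivalently $\Delta_n(x,i)\ge 0$ for all $x\ge 0$.
   Context: Parameters: $\lambda>0$, $0<\mu_l<\mu_h$, $\delta=\mu_h-\mu_l$, $R\ge 0$, $c>0$, and $h:\{0,1,2,\dots\}\to\mathbb{R}$ nondecreasing and convex with $h(0)=0$; the rates are normalized so that $\lambda+\mu_h+\beta=1$ for a discount rate $\beta>0$. Finite-horizon value functions on $S=\{0,1,2,\dots\}\times\{0,1\}$: $v_0\equiv 0$ and for $n\ge 0$: $v_{n+1}(0,0)=\lambda v_n(0,1)+\mu_h v_n(0,0)$; $v_{n+1}(x,0)=-h(x)+\lambda v_n(x,1)+\mu_l v_n(x-1,0)+\max\{\delta v_n(x,0),-c+\delta v_n(x-1,0)\}$ for $x\ge1$; $v_{n+1}(x,1)=\max\{R+v_{n+1}(x+1,0),v_{n+1}(x,0)\}$ for $x\ge 0$. Define $\Delta_n(x,i)=v_n(x,i)-v_n(x+1,i)$. *)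

(* Defs.v *)
From Stdlib Require Import Reals.
Open Scope R_scope.

(* State (x, i) with i : bool, false = 0, true = 1.
   v lam muh mul R c h n x i = v_n(x,i). delta = muh - mul. *)
Fixpoint v (lam muh mul Rw c : R) (h : nat -> R) (n : nat) : nat -> bool -> R :=
  match n with
  | O => fun _ _ => 0
  | S m =>
      let vm := v lam muh mul Rw c h m in
      let a := fun x : nat =>
        match x with
        | O => lam * vm O true + muh * vm O false
        | S y => - h x + lam * vm x true + mul * vm y false
                 + Rmax ((muh - mul) * vm x false) (- c + (muh - mul) * vm y false)
        end in
      fun x i => if i then Rmax (Rw + a (S x)) (a x) else a x
  end.

Definition Delta_v (lam muh mul Rw c : R) (h : nat -> R) (n x : nat) (i : bool) : R :=
  v lam muh mul Rw c h n x i - v lam muh mul Rw c h n (S x) i.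

(* Main.v *)
Require Import Defs.
From Stdlib Require Import Reals Lra.
Open Scope R_scope.

Lemma Rmax_mono a b c d : a <= c -> b <= d -> Rmax a b <= Rmax c d.
Proof. intros; unfold Rmax; destruct (Rle_dec a b), (Rle_dec c d); lra. Qed.

Theorem lemma1 (lam muh mul beta Rw c : R) (h : nat -> R)
  (Hlam : 0 < lam) (Hmul : 0 < mul) (Hmulh : mul < muh)
  (Hbeta : 0 < beta) (Hnorm : lam + muh + beta = 1)
  (HR : 0 <= Rw) (Hc : 0 < c)
  (Hh0 : h O = 0)
  (Hhmono : forall x : nat, h x <= h (S x))
  (Hhconv : forall x : nat, h (S x) - h x <= h (S (S x)) - h (S x)) :
  forall (n x : nat) (i : bool), 0 <= Delta_v lam muh mul Rw c h n x i.
Proof.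
  assert (K : forall n, (forall x, v lam muh mul Rw c h n (S x) false <= v lam muh mul Rw c h n x false)
                /\ (forall x, v lam muh mul Rw c h n (S x) true <= v lam muh mul Rw c h n x true)).
  { induction n as [|m [IH0 IH1]].
    - split; intros; simpl; lra.
    - assert (A : forall x, v lam muh mul Rw c h (S m) (S x) false <= v lam muh mul Rw c h (S m) x false).
      { intros [|y]; simpl.
        + pose proof (IH0 0%nat). pose proof (IH1 0%nat). pose proof (Hhmono 0%nat).
          assert (Rmax ((muh - mul) * v lam muh mul Rw c h m 1 false)
                   (- c + (muh - mul) * v lam muh mul Rw c h m 0 false)
                  <= (muh - mul) * v lam muh mul Rw c h m 0 false).
          { unfold Rmax; destruct Rle_dec; nra. }
          nra.
        + pose proof (IH0 y). pose proof (IH0 (S y)). pose proof (IH1 (S y)).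
          pose proof (Hhmono (S y)).
          assert (Rmax ((muh - mul) * v lam muh mul Rw c h m (S (S y)) false)
                   (- c + (muh - mul) * v lam muh mul Rw c h m (S y) false)
                  <= Rmax ((muh - mul) * v lam muh mul Rw c h m (S y) false)
                   (- c + (muh - mul) * v lam muh mul Rw c h m y false)).
          { apply Rmax_mono; nra. }
          nra. }
      split; [exact A|].
      intros x.
      change (Rmax (Rw + v lam muh mul Rw c h (S m) (S (S x)) false) (v lam muh mul Rw c h (S m) (S x) false)
              <= Rmax (Rw + v lam muh mul Rw c h (S m) (S x) false) (v lam muh mul Rw c h (S m) x false)).
      apply Rmax_mono; [pose proof (A (S x)); lra | apply A]. }
  intros n x i; unfold Delta_v; destruct (K n) as [K0 K1]; destruct i;
    [pose proof (K1 x) | pose proof (K0 x)]; lra.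
Qed.
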